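(* Let $\mathbf{M}$ be a $D\times D$ unimodular matrix and $\bm{\Gamma}_1,\dots,\bm{\Gamma}_L$ nonsingular $D\times D$ integer matrices that are pairwise commutative and coprime; let $\mathbf{M}_i=\mathbf{M}\bm{\Gamma}_i$. Then $\mathbf{R}=\mathbf{M}\bm{\Gamma}_1\cdots\bm{\Gamma}_L\mathbf{U}$ is an lcrm of the $\mathbf{M}_i$ for every unimodular $\mathbf{U}$; with $\mathbf{W}_i=\mathbf{M}\bm{\Gamma}_1\cdots\bm{\Gamma}_{i-1}\bm{\Gamma}_{i+1}\cdots\bm{\Gamma}_L$, there exist integer matrices $\widehat{\mathbf{W}}_i,\mathbf{Q}_i$ with $\mathbf{W}_i\widehat{\mathbf{W}}_i+\mathbf{M}_i\mathbf{Q}_i=\mathbf{I}$ for each $i$, and for any such choice every $\mathbf{m}\in\mathcal{N}(\mathbf{R})$ satisfies $$\mathbf{m}=\Big\langle\sum_{i=1}^L\mathbf{W}_i\widehat{\mathbf{W}}_i\mathbf{r}_i\Big\rangle_{\mathbf{R}},\qquad \mathbf{r}_i=\langle\mathbf{m}\rangle_{\mathbf{M}_i}.$$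
   Context: All matrices are $D\times D$ integer matrices; unimodular means integer with determinant $\pm1$. Commuting nonsingular integer matrices are coprime if all their common left (equivalently right) divisors are unimodular, where $\mathbf{A}$ is a left divisor of $\mathbf{M}$ if $\mathbf{A}^{-1}\mathbf{M}$ is integer. An lcrm of $\mathbf{M}_1,\dots,\mathbf{M}_L$ is a nonsingular integer $\mathbf{R}=\mathbf{M}_i\mathbf{P}_i$ (integer $\mathbf{P}_i$, all $i$) such that every such common right multiple equals $\mathbf{R}\mathbf{A}$ for integer $\mathbf{A}$. $\mathcal{N}(\mathbf{M})=\{\mathbf{k}\in\mathbb{Z}^D:\mathbf{k}=\mathbf{M}\mathbf{x},\ \mathbf{x}\in[0,1)^D\}$; $\langle\mathbf{m}\rangle_{\mathbf{M}}$ is the unique $\mathbf{r}\in\mathcal{N}(\mathbf{M})$ with $\mathbf{m}-\mathbf{r}\in\mathbf{M}\mathbb{Z}^D$. *)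

(* Defs.v *)
From HB Require Import structures.
From mathcomp Require Import all_boot all_order all_algebra.
From Stdlib Require Import ClassicalEpsilon.
Set Implicit Arguments. Unset Strict Implicit. Unset Printing Implicit Defensive.
Import Order.TTheory GRing.Theory Num.Theory.
Local Open Scope ring_scope.

Definition ratmx (m n : nat) (A : 'M[int]_(m, n)) : 'M[rat]_(m, n) :=
  map_mx (fun z : int => z%:~R) A.

Definition unimodular (D : nat) (A : 'M[int]_D) : Prop :=
  \det A = 1 \/ \det A = -1.

Definition nonsingular (D : nat) (A : 'M[int]_D) : Prop := \det A != 0.

(* A is a left divisor of M : A^{-1} M is an integer matrix, i.e.
   M = A X for some integer matrix X (A nonsingular). *)
Definition left_divisor (D : nat) (A M : 'M[int]_D) : Prop :=
  nonsingular A /\ exists X : 'M[int]_D, M = A *m X.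

Definition mx_coprime (D : nat) (A B : 'M[int]_D) : Prop :=
  forall C : 'M[int]_D, left_divisor C A -> left_divisor C B -> unimodular C.

Definition common_right_multiple (D L : nat) (Ms : 'I_L -> 'M[int]_D)
  (S : 'M[int]_D) : Prop :=
  forall i, exists P : 'M[int]_D, S = Ms i *m P.

Definition is_lcrm (D L : nat) (Ms : 'I_L -> 'M[int]_D) (R : 'M[int]_D) : Prop :=
  nonsingular R /\ common_right_multiple Ms R /\
  forall S : 'M[int]_D, nonsingular S -> common_right_multiple Ms S ->
    exists A : 'M[int]_D, S = R *m A.

Definition in_N (D : nat) (M : 'M[int]_D) (k : 'cV[int]_D) : Prop :=
  exists x : 'cV[rat]_D,
    (forall i, 0 <= x i 0 /\ x i 0 < 1) /\ ratmx k = ratmx M *m x.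

Definition is_modrep (D : nat) (M : 'M[int]_D) (m r : 'cV[int]_D) : Prop :=
  in_N M r /\ exists z : 'cV[int]_D, m - r = M *m z.

Definition modrep (D : nat) (M : 'M[int]_D) (m : 'cV[int]_D) : 'cV[int]_D :=
  epsilon (inhabits 0) (is_modrep M m).

(* Main.v *)
Require Import Defs.
From HB Require Import structures.
From mathcomp Require Import all_boot all_order all_algebra.
From mathcomp Require Import ring lra zify.
From Stdlib Require Import ClassicalEpsilon.
Import Order.TTheory GRing.Theory Num.Theory.
Local Open Scope ring_scope.

Lemma comm_bez_S n (A B X Y : 'M[int]_n.+1) : A *m B = B *m A ->
  A *m X + B *m Y = 1%:M ->
  exists P Q : 'M[int]_n.+1, A *m P + B *m Q = 1%:M /\
   P *m A = A *m P /\ P *m B = B *m P /\ Q *m A = A *m Q /\ Q *m B = B *m Q.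
Proof.
move=> AB bez.
have cAB : commr_rmorph (horner_mx B) A by move=> p; apply: comm_mx_horner.
have hmM p q : horner_morph cAB (p * q) = horner_morph cAB p * horner_morph cAB q by exact: rmorphM.
have hmD p q : horner_morph cAB (p + q) = horner_morph cAB p + horner_morph cAB q by exact: rmorphD.
have hmB p q : horner_morph cAB (p - q) = horner_morph cAB p - horner_morph cAB q by exact: rmorphB.
have hmN p : horner_morph cAB (- p) = - horner_morph cAB p by exact: rmorphN.
have hm_nat k : horner_morph cAB k%:R = k%:R by exact: rmorph_nat.
have evX : horner_morph cAB 'X = A by rewrite horner_morphX.
have evXC : horner_morph cAB ('X%:P) = B.
  by rewrite horner_morphC; exact: horner_mx_X.
have evCC c : horner_morph cAB (c%:P%:P) = c%:M by rewrite horner_morphC; exact: horner_mx_C.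
have evC p : horner_morph cAB p *m A = A *m horner_morph cAB p /\ horner_morph cAB p *m B = B *m horner_morph cAB p.
  have h1 : horner_morph cAB (p * 'X) = horner_morph cAB ('X * p) by rewrite mulrC.
  have h2 : horner_morph cAB (p * 'X%:P) = horner_morph cAB ('X%:P * p) by rewrite mulrC.
  rewrite !hmM evX evXC in h1 h2.
  by rewrite !mulmxE h1 h2.
pose N : 'M[{poly {poly int}}]_n.+1 := \matrix_(j, k)
  ((j == k)%:R - ((X k j)%:P%:P * 'X + (Y k j)%:P%:P * ('X)%:P)).
have key1 j a : \sum_k (horner_morph cAB (N j k)) a k = 0.
  have := congr1 (fun M : 'M[int]_n.+1 => M a j) bez.
  rewrite !mxE /= => H.
  have I1 : \sum_k (a == k)%:R * (j == k)%:R = (a == j)%:R :> int.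
    have := mulmx1 (1%:M : 'M[int]_n.+1); move/matrixP/(_ a j); rewrite !mxE.
    move=> <-; apply: eq_bigr => k _; rewrite !mxE; by rewrite (eq_sym k j).
  rewrite (eq_bigr (fun k => (a == k)%:R * (j == k)%:R - (A a k * X k j + B a k * Y k j))); last first.
    move=> k _; rewrite mxE hmB hmD !hmM evX evXC !evCC hm_nat.
    rewrite -!mulmxE !mul_scalar_mx; case: (j == k); rewrite ?mulr1 ?mulr0 -?idmxE !mxE ?mulr1 ?mulr0 ?mul0rn; try ring.
  by rewrite sumrB big_split /= H I1 subrr.
have hm_sum (F : 'I_n.+1 -> {poly {poly int}}) : horner_morph cAB (\sum_j F j) = \sum_j horner_morph cAB (F j) by exact: rmorph_sum.
have hmMn p k : horner_morph cAB (p *+ k) = horner_morph cAB p *+ k by exact: rmorphMn.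
have key2 a i : horner_morph cAB (\det N) a i = 0.
  have E k : \sum_j horner_morph cAB (\adj N i j) * horner_morph cAB (N j k) = horner_morph cAB (\det N) *+ (i == k).
    have := congr1 (fun M : 'M[{poly {poly int}}]_n.+1 => M i k) (mul_adj_mx N); rewrite !mxE => e.
    by rewrite -hmMn -e hm_sum; apply: eq_bigr => j _; rewrite hmM.
  transitivity (\sum_k (horner_morph cAB (\det N) *+ (i == k)) a k).
    rewrite (bigD1 i) //= eqxx big1 ?addr0 // => k; rewrite eq_sym => /negbTE ->.
    by rewrite mulr0n mxE.
  rewrite (eq_bigr (fun k => \sum_j \sum_b horner_morph cAB (\adj N i j) a b * horner_morph cAB (N j k) b k)); last first.
    by move=> k _; rewrite -E summxE; apply: eq_bigr => j _; rewrite -mulmxE mxE.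
  rewrite exchange_big /=; apply: big1 => j _.
  rewrite exchange_big /=; apply: big1 => b _.
  by rewrite -mulr_sumr key1 mulr0.
set f := \det N.
have Hc : (f`_0)`_0 = 1.
  have -> : (f`_0)`_0 = horner_eval (0:int) (horner_eval (0:{poly int}) f) by rewrite -!horner_coef0.
  rewrite /f -!det_map_mx.
  rewrite (_ : map_mx _ (map_mx _ N) = 1%:M) ?det1 //.
  apply/matrixP => j k; rewrite !mxE /= /horner_eval !hornerE.
  by case: (j == k); rewrite /= ?mulr1n ?mulr0n ?hornerE.
have dec (R : nzRingType) (p : {poly R}) : exists q, p = (p`_0)%:P + q * 'X.
  have : root (p - (p`_0)%:P) 0 by rewrite /root hornerD hornerN hornerC horner_coef0 subrr.
  case/factor_theorem => q Hq; exists q.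
  by rewrite -[X in q * X]subr0 -polyC0 -Hq addrC subrK.
have [q1 Hq1] := dec _ f.
have [q2 Hq2] := dec _ (f`_0).
have hf0 : horner_morph cAB f = 0 by apply/matrixP => a i; rewrite key2 mxE.
have E : f = 1 + (q2%:P * 'X%:P + q1 * 'X).
  by rewrite {1}Hq1 Hq2 Hc polyCD polyCM polyC1 addrA.
have hm1 : horner_morph cAB 1 = 1 by exact: rmorph1.
rewrite E !hmD !hmM evX evXC hm1 in hf0.
have [c1A c1B] := evC q1; have [c2A c2B] := evC (q2%:P).
exists (- horner_morph cAB q1), (- horner_morph cAB q2%:P).
split; last by rewrite !mulNmx !mulmxN c1A c1B c2A c2B.
move/eqP: hf0; rewrite addrC addr_eq0 => /eqP h.
by rewrite !mulmxN -c1A -c2B !mulmxE idmxE -opprD addrC h opprK.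
Qed.

Lemma comm_bez D (A B X Y : 'M[int]_D) : A *m B = B *m A ->
  A *m X + B *m Y = 1%:M ->
  exists P Q : 'M[int]_D, A *m P + B *m Q = 1%:M /\
   P *m A = A *m P /\ P *m B = B *m P /\ Q *m A = A *m Q /\ Q *m B = B *m Q.
Proof.
case: D A B X Y => [|n] A B X Y; last exact: comm_bez_S.
move=> _ _; exists 0, 0.
by split; [|split; [|split; [|split]]]; apply/matrixP => -[].
Qed.

Lemma unimod_unit D (C : 'M[int]_D) : unimodular C -> C \in unitmx.
Proof. by rewrite unitmxE; case=> ->; rewrite ?unitrN unitr1. Qed.

Lemma bez_of_coprime D (A B : 'M[int]_D) : nonsingular A -> mx_coprime A B ->
  exists X Y : 'M[int]_D, A *m X + B *m Y = 1%:M.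
Proof.
move=> nsA cop.
have [L uL [R uR [d _ E]]] := int_Smith_normal_form (row_mx A B).
set S := (\matrix_(i, j) _ : 'M[int]_(D, D + D)) in E.
have rS : rsubmx S = 0.
  apply/matrixP => i j; rewrite !mxE /=.
  have -> : ((i : nat) == D + j)%N = false.
    by apply/negbTE; rewrite neq_ltn ltn_addr.
  by rewrite mulr0n.
set C := L *m lsubmx S.
have SE : S = row_mx (lsubmx S) 0 by rewrite -rS hsubmxK.
set Ru := usubmx R.
have KE : row_mx A B = C *m Ru.
  rewrite E SE -[R in _ *m R](vsubmxK R) mul_mx_row mulmx0 mul_row_col mul0mx addr0.
  by [].
have AE : A = C *m lsubmx Ru /\ B = C *m rsubmx Ru.
  by move: KE; rewrite -[Ru](hsubmxK Ru) mul_mx_row; case/eq_row_mx => -> ->; rewrite !hsubmxK.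
have nsC : nonsingular C.
  move: nsA; rewrite /nonsingular AE.1 det_mulmx; apply: contra => /eqP ->.
  by rewrite mul0r.
have uC : C \in unitmx.
  apply: unimod_unit; apply: cop; split => //.
  - by exists (lsubmx Ru); exact: AE.1.
  - by exists (rsubmx Ru); exact: AE.2.
set N := invmx R *m col_mx 1%:M (0 : 'M[int]_(D, D)).
have CE : C = A *m usubmx N + B *m dsubmx N.
  rewrite -mul_row_col vsubmxK /N mulmxA E mulmxK // SE mul_mx_row mulmx0.
  by rewrite mul_row_col mulmx1 mul0mx addr0.
exists (usubmx N *m invmx C), (dsubmx N *m invmx C).
by rewrite !mulmxA -mulmxDl -CE mulmxV.
Qed.

Section Prods.
Variables (D : nat) (I : eqType).
Implicit Types (F : I -> 'M[int]_D) (s : seq I).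

Lemma comm_prod (G : 'M[int]_D) F s (P : pred I) :
  (forall j, G *m F j = F j *m G) ->
  G *m \big[mulmx/1%:M]_(j <- s | P j) F j = \big[mulmx/1%:M]_(j <- s | P j) F j *m G.
Proof.
move=> cF; apply: (big_ind (fun X => G *m X = X *m G)).
- by rewrite mulmx1 mul1mx.
- by move=> x y hx hy; rewrite mulmxA hx -!mulmxA hy.
- by move=> j _; apply: cF.
Qed.

Lemma prod_extract F s i : uniq s -> i \in s ->
  (forall j k, F j *m F k = F k *m F j) ->
  \big[mulmx/1%:M]_(j <- s) F j = F i *m \big[mulmx/1%:M]_(j <- s | j != i) F j.
Proof.
move=> + + cF; elim: s => //= a s IH /andP[nas us]; rewrite inE.
case: (eqVneq i a) => [-> _ | nia /= iS].
  rewrite !big_cons eqxx /=; congr (_ *m _).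
  have fs : [seq j <- s | j != a] = s.
    by apply/all_filterP; apply/allP => j js; apply: contraNneq nas => <-.
  by rewrite -[RHS]big_filter fs.
rewrite !big_cons (IH us iS) eq_sym nia !mulmxA; congr (_ *m _).
exact: cF.
Qed.

Lemma prod_bez (G : 'M[int]_D) F s :
  (forall j, j \in s -> G *m F j = F j *m G) ->
  (forall j, j \in s -> exists X Y : 'M[int]_D, G *m X + F j *m Y = 1%:M) ->
  exists X Y : 'M[int]_D, G *m X + (\big[mulmx/1%:M]_(j <- s) F j) *m Y = 1%:M.
Proof.
elim: s => [|a s IH] cF bz.
  by exists 0, 1%:M; rewrite big_nil mulmx0 add0r mulmx1.
have [X1 [Y1 H1]] := bz a (mem_head a s).
have sub j : j \in s -> j \in a :: s by rewrite inE => ->; rewrite orbT.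
have [X2 [Y2 H2]] := IH (fun j js => cF j (sub j js)) (fun j js => bz j (sub j js)).
set W := \big[mulmx/1%:M]_(j <- s) F j in H2.
have cGa := cF a (mem_head a s).
exists (X1 + F a *m X2 *m Y1), (Y2 *m Y1).
have e1 : G *m (F a *m X2 *m Y1) = F a *m (G *m X2) *m Y1 by rewrite !mulmxA cGa.
have e2 : F a *m W *m (Y2 *m Y1) = F a *m (W *m Y2) *m Y1 by rewrite !mulmxA.
by rewrite big_cons mulmxDr -addrA e1 -/W e2 -mulmxDl -mulmxDr H2 mulmx1 H1.
Qed.

End Prods.

Lemma prod_least D k (I : eqType) (F : I -> 'M[int]_D) (s : seq I) (T : 'M[int]_(D, k)) :
  uniq s -> (forall i j, F i *m F j = F j *m F i) ->
  (forall i j, i != j -> exists X Y : 'M[int]_D, F i *m X + F j *m Y = 1%:M) ->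
  (forall i, i \in s -> exists B, T = F i *m B) ->
  exists A, T = (\big[mulmx/1%:M]_(j <- s) F j) *m A.
Proof.
move=> + cF bz; elim: s => [|a s IH] /= us hT.
  by exists T; rewrite big_nil mul1mx.
case/andP: us => nas us.
have sub j : j \in s -> j \in a :: s by rewrite inE => ->; rewrite orbT.
have [A' HA'] := IH us (fun j js => hT j (sub j js)).
have [B HB] := hT a (mem_head a s).
set W := \big[mulmx/1%:M]_(j <- s) F j in HA'.
have [X [Y bzW]] : exists X Y : 'M[int]_D, F a *m X + W *m Y = 1%:M.
  apply: prod_bez => j js; first exact: cF.
  by apply: bz; apply: contraNneq nas => ->.
have cWa : F a *m W = W *m F a by apply: comm_prod => j.
have [P [Q [bPQ [cPG [cPW [cQG cQW]]]]]] := @comm_bez _ _ _ _ _ cWa bzW.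
exists (Q *m B + P *m A').
rewrite big_cons -/W mulmxDr !mulmxA.
have e1 : F a *m W *m Q *m B = W *m Q *m T.
  by rewrite HB !mulmxA -(mulmxA W Q) cQG mulmxA -cWa.
have e2 : F a *m W *m P *m A' = F a *m P *m T.
  by rewrite HA' !mulmxA -(mulmxA (F a) W P) -cPW mulmxA.
by rewrite e1 e2 -mulmxDl addrC bPQ mul1mx.
Qed.

Lemma int0 (w : int) : -1 < w -> w < 1 -> w = 0.
Proof. lia. Qed.

Lemma ratmxM D k (A : 'M[int]_D) (B : 'M[int]_(D, k)) :
  ratmx (A *m B) = ratmx A *m ratmx B.
Proof. by rewrite /ratmx map_mxM. Qed.

Lemma ratmxB D k (A B : 'M[int]_(D, k)) : ratmx (A - B) = ratmx A - ratmx B.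
Proof. by rewrite /ratmx map_mxB. Qed.

Lemma ratmx_unit D (R : 'M[int]_D) : nonsingular R -> ratmx R \in unitmx.
Proof.
by rewrite /nonsingular unitmxE /ratmx det_map_mx unitfE intr_eq0.
Qed.

Lemma modrep_uniq D (R : 'M[int]_D) m r r' : nonsingular R ->
  is_modrep R m r -> is_modrep R m r' -> r = r'.
Proof.
move=> nsR [[x [hx ex]] [z ez]] [[x' [hx' ex']] [z' ez']].
have e : r - r' = R *m (z' - z).
  by rewrite mulmxBr -ez -ez' opprB [RHS]addrC [RHS]addrA subrK.
have uR := ratmx_unit _ _ nsR.
have ex2 : x - x' = ratmx (z' - z).
  apply: (can_inj (mulKmx uR)) => /=.
  by rewrite mulmxBr -ex -ex' -ratmxB e ratmxM.
have z0 : z' - z = 0.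
  apply/matrixP => i j; rewrite [j]ord1 mxE.
  have := congr1 (fun M : 'M[rat]_(D, 1) => M i 0) ex2; rewrite !mxE => h.
  have [h1 h2] := hx i; have [h3 h4] := hx' i.
  have l1 : (z' i 0 - z i 0)%:~R < (1 : int)%:~R :> rat by rewrite -h; lra.
  have l2 : (-1 : int)%:~R < (z' i 0 - z i 0)%:~R :> rat.
    by rewrite -h; rewrite rmorphN rmorph1 /=; lra.
  rewrite ltr_int in l1; rewrite ltr_int in l2.
  exact: int0 l2 l1.
by apply/eqP; rewrite -subr_eq0 e z0 mulmx0.
Qed.

Lemma modrep_exists D (R : 'M[int]_D) m : nonsingular R -> exists r, is_modrep R m r.
Proof.
move=> nsR; have uR := ratmx_unit _ _ nsR.
set x := invmx (ratmx R) *m ratmx m.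
set z : 'cV[int]_D := \col_i Num.floor (x i 0).
exists (m - R *m z); split; last first.
  by exists z; rewrite opprB addrC subrK.
exists (x - ratmx z); split.
  move=> i; rewrite !mxE; split.
    by rewrite subr_ge0 floor_le.
  by rewrite ltrBlDr addrC -(rmorph1 (intr : {rmorphism int -> rat})) /= -rmorphD floorD1_gt.
by rewrite ratmxB ratmxM mulmxBr /x mulKVmx.
Qed.

Lemma modrepP D (R : 'M[int]_D) m : nonsingular R -> is_modrep R m (modrep R m).
Proof.
by move=> nsR; apply: epsilon_spec; apply: modrep_exists.
Qed.

Lemma modrep_eq D (R : 'M[int]_D) m r : nonsingular R -> is_modrep R m r -> modrep R m = r.
Proof. by move=> nsR h; apply: (modrep_uniq _ _ _ _ _ nsR (modrepP _ _ _ nsR) h). Qed.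

Lemma ns_prod D (I : Type) (F : I -> 'M[int]_D) (s : seq I) (P : pred I) :
  (forall j, nonsingular (F j)) ->
  nonsingular (\big[mulmx/1%:M]_(j <- s | P j) F j).
Proof.
move=> nsF; apply: (big_ind (fun X : 'M[int]_D => nonsingular X)).
- by rewrite /nonsingular det1 oner_eq0.
- by move=> x y hx hy; rewrite /nonsingular det_mulmx mulf_neq0.
- by move=> j _; apply: nsF.
Qed.

Lemma ns_mul D (A B : 'M[int]_D) : nonsingular A -> nonsingular B -> nonsingular (A *m B).
Proof. by move=> hA hB; rewrite /nonsingular det_mulmx mulf_neq0. Qed.

Lemma ns_unimod D (A : 'M[int]_D) : unimodular A -> nonsingular A.
Proof. by rewrite /nonsingular; case=> ->; rewrite ?oppr_eq0 oner_eq0. Qed.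

Lemma zm_id (V : zmodType) (m r a b : V) : m - (r - a + b) = m - r + a - b.
Proof. by rewrite opprD opprB addrA addrCA [a + _]addrC. Qed.

Theorem corollary3 (D L : nat) (M : 'M[int]_D) (Gam : 'I_L -> 'M[int]_D) :
  unimodular M ->
  (forall i, nonsingular (Gam i)) ->
  (forall i j, Gam i *m Gam j = Gam j *m Gam i) ->
  (forall i j, i != j -> mx_coprime (Gam i) (Gam j)) ->
  let Ms := fun i => M *m Gam i in
  let Ws := fun i => M *m \big[mulmx/1%:M]_(j < L | j != i) Gam j in
  (forall U : 'M[int]_D, unimodular U ->
     is_lcrm Ms (M *m \big[mulmx/1%:M]_(i < L) Gam i *m U))
  /\ (forall i, exists Wh Q : 'M[int]_D, Ws i *m Wh + Ms i *m Q = 1%:M)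
  /\ (forall (Wh Q : 'I_L -> 'M[int]_D),
        (forall i, Ws i *m Wh i + Ms i *m Q i = 1%:M) ->
        forall U : 'M[int]_D, unimodular U ->
        let R := M *m \big[mulmx/1%:M]_(i < L) Gam i *m U in
        forall m : 'cV[int]_D, in_N R m ->
          m = modrep R (\sum_(i < L) Ws i *m Wh i *m modrep (Ms i) m)).
Proof.
move=> uM nsG cG copG Ms Ws.
have uMu := unimod_unit _ _ uM.
have bz i j : i != j -> exists X Y : 'M[int]_D, Gam i *m X + Gam j *m Y = 1%:M.
  by move=> ij; apply: bez_of_coprime; [exact: nsG | exact: copG].
set P := \big[mulmx/1%:M]_(i < L) Gam i.
have ue := index_enum_uniq 'I_L.
have nsP : nonsingular P by apply: ns_prod.
have nsR U : unimodular U -> nonsingular (M *m P *m U).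
  by move=> uU; apply: ns_mul; [apply: ns_mul; [apply: ns_unimod|] | apply: ns_unimod].
have least k (T : 'M[int]_(D, k)) : (forall i, exists B, T = Gam i *m B) ->
    exists A, T = P *m A.
  move=> hT; apply: (prod_least _ _ _ _ _ _ ue cG bz) => i _; exact: hT.
split.
  move=> U uU; split; first exact: nsR.
  split.
    move=> i; exists (\big[mulmx/1%:M]_(j <- index_enum 'I_L | j != i) Gam j *m U).
    rewrite /Ms /P (prod_extract _ _ _ _ i ue (mem_index_enum i) cG).
    by rewrite !mulmxA.
  move=> S _ hS.
  have [A HA] : exists A, invmx M *m S = P *m A.
    apply: least => i; have [B ->] := hS i.
    by exists B; rewrite /Ms -mulmxA mulKmx.
  exists (invmx (U) *m A).
  rewrite mulmxA mulmxK ?unimod_unit // -mulmxA -HA mulKVmx //.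
split.
  move=> i.
  have [X [Y H]] : exists X Y : 'M[int]_D, Gam i *m X +
      (\big[mulmx/1%:M]_(j <- [seq j <- index_enum 'I_L | j != i]) Gam j) *m Y = 1%:M.
    apply: prod_bez => j; rewrite mem_filter => /andP[ji _].
      exact: cG.
    by apply: bz; rewrite eq_sym.
  exists (Y *m invmx M), (X *m invmx M).
  rewrite /Ws /Ms -big_filter !mulmxA -!mulmxDl -(mulmxA M) -(mulmxA M) -mulmxDr addrC H.
  by rewrite mulmx1 mulmxV.
move=> Wh Q HWQ U uU R m mN.
have nsRR : nonsingular R by apply: nsR.
have nsMs i : nonsingular (Ms i) by apply: ns_mul; [apply: ns_unimod | apply: nsG].
set rr := fun i => modrep (Ms i) m.
have hr i : is_modrep (Ms i) m (rr i) by apply: modrepP.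
set s := \sum_(i < L) Ws i *m Wh i *m rr i.
pose K j i := \big[mulmx/1%:M]_(k <- [seq k <- index_enum 'I_L | k != j] | k != i) Gam k.
have hW i j : j != i -> Ws j = Ms i *m K j i.
  move=> ji; rewrite /Ws /Ms -big_filter (prod_extract _ _ _ _ i _ _ cG).
  - by rewrite mulmxA.
  - exact: filter_uniq.
  - by rewrite mem_filter eq_sym ji mem_index_enum.
have hv i : exists B, invmx M *m (m - s) = Gam i *m B.
  have [_ [zi ezi]] := hr i.
  have e1 : Ws i *m Wh i *m rr i = rr i - Ms i *m (Q i *m rr i).
    have : Ws i *m Wh i = 1%:M - Ms i *m Q i by rewrite -(HWQ i) addrK.
    by move=> ->; rewrite mulmxBl mul1mx mulmxA.
  set S2 := \sum_(j < L | j != i) K j i *m Wh j *m rr j.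
  have e2 : \sum_(j < L | j != i) Ws j *m Wh j *m rr j = Ms i *m S2.
    rewrite /S2 mulmx_sumr; apply: eq_bigr => j ji.
    by rewrite (hW i j ji) !mulmxA.
  exists (zi + Q i *m rr i - S2).
  rewrite /s (bigD1 i) //= e1 e2 zm_id ezi -mulmxDr -mulmxBr /Ms.
  by rewrite -mulmxA mulKmx.
have [A HA] := least _ _ hv.
symmetry; apply: modrep_eq => //; split => //.
exists (- (invmx U *m A)).
rewrite mulmxN /R mulmxA mulmxK ?unimod_unit // -mulmxA -HA mulKVmx //.
by rewrite opprB.
Qed.
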